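(* Let $\mathcal F$ be a family of finite ordered graphs and let $\mathrm{Forb}^+_{T_{\mathrm{Graph}}\cup T_{\mathrm{LinOrder}}}(\mathcal F)$ be the theory of all ordered graphs that contain no non-induced copy of any member of $\mathcal F$. For the axiom-adding interpretation $I^<_{\mathcal F}\colon T_{\mathrm{Graph}}\leadsto\mathrm{Forb}^+_{T_{\mathrm{Graph}}\cup T_{\mathrm{LinOrder}}}(\mathcal F)$ (acting identically on $E$, so $I^<_{\mathcal F}(N)$ is the graph part of $N$), we have $$\chi(I^<_{\mathcal F})=\max\{\chi_<(\mathcal F),1\},$$ where $\chi_<(\mathcal F)=\inf\{\chi_<(F):F\in\mathcal F\}$ (with $\inf\varnothing=\infty$).
   Context: An ordered graph is a finite simple graph together with a strict linear order $<$ on its vertex set. An ordered graph $G$ contains a non-induced copy of an ordered graph $F$ if there is an injection $V(F)\to V(G)$ that preserves the order and maps edges to edges. A proper interval coloring of an ordered graph $G$ is a map $f\colon V(G)\to[\ell]$ that is a proper coloring of the graph (adjacent vertices get distinct colors) and whose color classes are intervals of the order (if $u<v<w$ and $f(u)=f(w)$ then $f(v)=f(u)$). The interval chromatic number $\chi_<(G)$ is the least $\ell$ admitting a proper interval coloring $f\colon V(G)\to[\ell]$. For an open interpretation $I\colon T_{\mathrm{Graph}}\leadsto T$, $\chi(I)=\sup(\{\ell\in\mathbb{N}_+:\forall n\in\mathbb{N}\ \exists N\in\mathcal M_n[T],\ T_{n,\ell}\subseteq I(N)\}\cup\{0\})+1$, where $\mathcal M_n[T]$ is the set of $n$-vertex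 models of $T$ up to isomorphism, $T_{n,\ell}$ the complete $\ell$-partite graph on $n$ vertices with parts of sizes $\lfloor n/\ell\rfloor$ or $\lceil n/\ell\rceil$, and $G\subseteq H$ means an injection mapping edges to edges. *)

(* Defs.v *)
From Stdlib Require Import ClassicalEpsilon.
From mathcomp Require Import all_boot.
Set Implicit Arguments. Unset Strict Implicit. Unset Printing Implicit Defensive.

Inductive enat := Fin of nat | Inf.

Definition emax (a b : enat) : enat :=
  match a, b with
  | Fin m, Fin n => Fin (maxn m n)
  | _, _ => Inf
  end.

Definition esucc (a : enat) : enat :=
  match a with Fin m => Fin m.+1 | Inf => Inf end.

Definition is_lub (S : nat -> Prop) (m : nat) : Prop :=
  (forall k, S k -> k <= m) /\ (forall m', (forall k, S k -> k <= m') -> m <= m').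

Definition nat_sup (S : nat -> Prop) : enat :=
  match excluded_middle_informative (exists m, is_lub S m) with
  | left H => Fin (proj1_sig (constructive_indefinite_description _ H))
  | right _ => Inf
  end.

Definition is_least (S : nat -> Prop) (m : nat) : Prop :=
  S m /\ (forall k, S k -> m <= k).

Definition nat_inf (S : nat -> Prop) : enat :=
  match excluded_middle_informative (exists m, is_least S m) with
  | left H => Fin (proj1_sig (constructive_indefinite_description _ H))
  | right _ => Inf
  end.

Definition is_graph (n : nat) (e : rel 'I_n) : Prop :=
  symmetric e /\ irreflexive e.

(* A finite ordered graph: vertex set 'I_ov with the natural order of 'I_ov
   (every finite ordered graph is isomorphic to one of this form). *)
Record ograph := OGraph {
  ov : nat;
  oadj : rel 'I_ov;
  ograph_sym : symmetric oadj;
  ograph_irr : irreflexive oadj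
}.

Definition ocontains (n : nat) (G : rel 'I_n) (F : ograph) : Prop :=
  exists f : 'I_(ov F) -> 'I_n,
    [/\ injective f,
        (forall x y : 'I_(ov F), x < y -> f x < f y) &
        (forall x y : 'I_(ov F), @oadj F x y -> G (f x) (f y))].

Definition gsubgraph (m n : nat) (G : rel 'I_m) (H : rel 'I_n) : Prop :=
  exists f : 'I_m -> 'I_n,
    injective f /\ (forall x y, G x y -> H (f x) (f y)).

Definition proper_interval_coloring (G : ograph) (l : nat)
    (f : 'I_(ov G) -> 'I_l) : Prop :=
  (forall u v, @oadj G u v -> f u != f v) /\
  (forall u v w : 'I_(ov G), u < v -> v < w -> f u = f w -> f v = f u).

Definition is_interval_chromatic (G : ograph) (l : nat) : Prop :=
  is_least (fun k => exists f, @proper_interval_coloring G k f) l.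

Definition chi_lt_family (Fam : ograph -> Prop) : enat :=
  nat_inf (fun l => exists G, Fam G /\ is_interval_chromatic G l).

Definition forb_model (Fam : ograph -> Prop) (n : nat) (e : rel 'I_n) : Prop :=
  is_graph e /\ (forall F, Fam F -> ~ ocontains e F).

(* T_{n,l}: complete l-partite graph on n vertices, parts = residue classes
   mod l (sizes floor(n/l) or ceil(n/l)). *)
Definition turan_graph (n l : nat) : rel 'I_n :=
  fun i j => (i %% l) != (j %% l).

Definition chi_interp (Fam : ograph -> Prop) : enat :=
  esucc (nat_sup (fun l => l = 0 \/
    (0 < l /\ forall n : nat, exists e : rel 'I_n,
        forb_model Fam e /\ gsubgraph (@turan_graph n l) e))).

(* Main.v *)
Require Import Defs.
From Stdlib Require Import ClassicalEpsilon Classical.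
From mathcomp Require Import all_boot zify.
Set Implicit Arguments. Unset Strict Implicit. Unset Printing Implicit Defensive.

Lemma least_exists (S : nat -> Prop) : (exists k, S k) -> exists m, is_least S m.
Proof.
move=> [k Hk]; apply: NNPP => Hno.
have H : forall n, forall j, j <= n -> ~ S j.
  elim=> [|n IH] j Hj HS.
    apply: Hno; exists j; split => // i _; lia.
  case: (leqP j n) => Hjn; first exact: (IH j Hjn HS).
  apply: Hno; exists j; split => // i Hi.
  case: (leqP j i) => // Hi'; exfalso; apply: (IH i _ Hi); lia.
exact: (H k k (leqnn k) Hk).
Qed.

Lemma nat_inf_least S m : is_least S m -> nat_inf S = Fin m.
Proof.
move=> Hm; rewrite /nat_inf; case: excluded_middle_informative => [H|H].
  case: constructive_indefinite_description => m' [Hm'1 Hm'2] /=.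
  case: Hm => H1 H2; congr Fin; apply/eqP; rewrite eqn_leq Hm'2 ?H2 //.
by exfalso; apply: H; exists m.
Qed.

Lemma nat_inf_none S : ~ (exists m, is_least S m) -> nat_inf S = Inf.
Proof. by move=> H; rewrite /nat_inf; case: excluded_middle_informative. Qed.

Lemma nat_sup_lub S m : is_lub S m -> nat_sup S = Fin m.
Proof.
move=> Hm; rewrite /nat_sup; case: excluded_middle_informative => [H|H].
  case: constructive_indefinite_description => m' [Hm'1 Hm'2] /=.
  case: Hm => H1 H2; congr Fin; apply/eqP; rewrite eqn_leq Hm'2 ?H2 //.
by exfalso; apply: H; exists m.
Qed.

Lemma nat_sup_none S : ~ (exists m, is_lub S m) -> nat_sup S = Inf.
Proof. by move=> H; rewrite /nat_sup; case: excluded_middle_informative. Qed.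

Section Main.
Variable Fam : ograph -> Prop.
Definition Tset k := exists G, Fam G /\ is_interval_chromatic G k.
Definition Mod n l := exists e : rel 'I_n, forb_model Fam e /\ gsubgraph (@turan_graph n l) e.

Hypothesis key : forall l, 0 < l -> ((forall n, Mod n l) <-> (forall k, Tset k -> l < k)).

Lemma final : chi_interp Fam = emax (chi_lt_family Fam) (Fin 1).
Proof.
rewrite /chi_interp /chi_lt_family -/Tset.
have HS : forall l, (l = 0 \/ (0 < l /\ forall n, Mod n l)) <->
                    (l = 0 \/ (0 < l /\ forall k, Tset k -> l < k)).
  move=> l; split => -[->|[Hl H]]; auto; right; split => //; exact/(key Hl).
case: (classic (exists k, Tset k)) => [Hex|Hno].
  have [c [Hc1 Hc2]] := least_exists Hex.
  rewrite (@nat_inf_least _ c) //.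
  rewrite (@nat_sup_lub _ (maxn c 1).-1) /=; first by congr Fin; lia.
  split.
    move=> k /HS [->|[Hk H]]; first by [].
    have := H c Hc1; lia.
  move=> m' Hm'; apply: Hm'; apply/HS.
  case: (leqP c 1) => Hc; first by left; lia.
  right; split; first by lia.
  move=> k /Hc2; lia.
rewrite nat_inf_none; last by move=> [m [Hm _]]; apply: Hno; exists m.
rewrite nat_sup_none //= => -[m [Hm _]].
have : m.+1 <= m by apply: Hm; apply/HS; right; split => // k Hk; exfalso; apply: Hno; exists k.
by rewrite ltnn.
Qed.
End Main.

Lemma construct (Fam : ograph -> Prop) l n : 0 < l ->
  (forall k, Tset Fam k -> l < k) -> Mod Fam n l.
Proof.
move=> lpos Hk.
pose leT := fun i j => i %% l <= j %% l.
pose s := sort leT (iota 0 n).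
have ps : perm_eq s (iota 0 n) by rewrite perm_sort perm_refl.
have ss : size s = n by rewrite (perm_size ps) size_iota.
have ms : forall x, (x \in s) = (x < n) by move=> x; rewrite (perm_mem ps) mem_iota.
have srt : sorted leT s by apply: sort_sorted => x y; exact: leq_total.
pose col := fun x : nat => nth 0 s x %% l.
pose e : rel 'I_n := fun x y => col x != col y.
have hlt : forall i : 'I_n, index (val i) s < n.
  by move=> i; have := index_mem (val i) s; rewrite ms ltn_ord ss.
pose h := fun i : 'I_n => Ordinal (hlt i).
exists e; split; last first.
  exists h; split.
    move=> i j /(congr1 val) /= Hij; apply: val_inj.
    have := @index_inj _ 0 s (val i) (val j); rewrite !ms !ltn_ord; exact.
  move=> x y; rewrite /turan_graph /e /col /= !nth_index ?ms //.
split; first by split => [x y|x]; rewrite /e ?eqxx // eq_sym.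
move=> F HF [g [ginj gmon gadj]].
have cl : forall x, col x < l by move=> x; rewrite ltn_pmod.
pose c := fun v : 'I_(ov F) => Ordinal (cl (g v)).
have Hc : proper_interval_coloring (l:=l) c.
  split.
    move=> u v /gadj; rewrite /e /=; apply: contra => /eqP [] ->; done.
  move=> u v w uv vw [] Huw; apply: val_inj => /=.
  have mono : forall a b : 'I_n, a <= b -> col a <= col b.
    have trT : transitive leT by move=> ? ? ? ; exact: leq_trans.
    have rfT : reflexive leT by move=> ?; exact: leqnn.
    move=> a b ab; apply: (sorted_leq_nth trT rfT 0 srt) => //; by rewrite inE ss.
  have H1 := mono _ _ (ltnW (gmon _ _ uv)).
  have H2 := mono _ _ (ltnW (gmon _ _ vw)).
  lia.
have [m [[f Hf] Hm]] := least_exists (S := fun k => exists f, proper_interval_coloring (G:=F) (l:=k) f) (ex_intro _ l (ex_intro _ c Hc)).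
have := Hk m (ex_intro _ F (conj HF (conj (ex_intro _ f Hf) Hm))).
by have := Hm l (ex_intro _ c Hc); lia.
Qed.

Lemma count_split (P : pred nat) p q n : p <= q <= n ->
  count P (iota p (n - p)) = count P (iota p (q - p)) + count P (iota q (n - q)).
Proof.
move=> /andP [pq qn].
have -> : n - p = (q - p) + (n - q) by lia.
by rewrite iotaD count_cat; congr (_ + count _ (iota _ _)); lia.
Qed.

Lemma greedy (n : nat) (cls : nat -> nat) (t : nat) : 0 < t ->
  forall j p (K : seq nat), uniq K -> j <= size K ->
  (forall c, c \in K -> j * t <= count (fun x => cls x == c) (iota p (n - p))) ->
  exists (g pi : nat -> nat),
    [/\ (forall x y, x < y -> y < j * t -> g x < g y),
        (forall x, x < j * t -> p <= g x < n),
        (forall x, x < j * t -> cls (g x) = pi (x %/ t)),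
        (forall i i', i < j -> i' < j -> pi i = pi i' -> i = i') &
        (forall i, i < j -> pi i \in K)].
Proof.
move=> tpos; elim=> [|j IH] p K uK jK HK.
  by exists id, id; split => // x; rewrite mul0n.
have [c0 Kc0] : exists c, c \in K by case: K uK jK HK => // c K' _ _ _; exists c; rewrite inE eqxx.
have pn : p < n.
  have := HK c0 Kc0; case: (leqP n p) => // np; have -> : n - p = 0 by lia.
  by rewrite /=; lia.
pose P := fun q => has (fun c => t <= count (fun x => cls x == c) (iota p (q.+1 - p))) K.
have Pn1 : P n.-1.
  apply/hasP; exists c0 => //; have := HK c0 Kc0.
  have -> : n.-1.+1 = n by lia.
  lia.
have exP : exists q, P q by exists n.-1.
case: (ex_minnP exP) => q Pq qmin.
case/hasP: Pq => c Kc Hc.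
have qn : q < n by have := qmin _ Pn1; lia.
have pq : p <= q.
  case: (leqP p q) => // qp; move: Hc; have -> : q.+1 - p = 0 by lia.
  by rewrite /=; lia.
have Hsmall : forall c', c' \in K -> count (fun x => cls x == c') (iota p (q - p)) < t.
  move=> c' Kc'; case: (ltngtP p q) pq => // [pltq|<-] _; last by rewrite subnn.
  have : ~~ P q.-1 by apply/negP => /qmin; lia.
  move/hasPn => /(_ c' Kc'); have -> : q.-1.+1 = q by lia.
  by rewrite -ltnNge.
pose K' := rem c K.
have uK' : uniq K' by exact: rem_uniq.
have jK' : j <= size K'.
  by rewrite /K' size_rem // -ltnS (ltn_predK jK).
have HK' : forall c', c' \in K' -> j * t <= count (fun x => cls x == c') (iota q.+1 (n - q.+1)).
  move=> c' Kc'; have Kc'2 : c' \in K by exact: (mem_rem Kc').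
  have := HK c' Kc'2; rewrite (@count_split _ p q n); last by rewrite pq ltnW.
  have -> : n - q = (n - q.+1).+1 by lia.
  rewrite /= .
  have := Hsmall c' Kc'2.
  case: (cls q == c') => /=; lia.
have [g' [pi' [g'mon g'rng g'cls pi'inj pi'K]]] := IH q.+1 K' uK' jK' HK'.
pose S := [seq x <- iota p (q.+1 - p) | cls x == c].
have sS : t <= size S by rewrite size_filter.
have Ssrt : sorted ltn S by apply: sorted_filter; [exact: ltn_trans | exact: iota_ltn_sorted].
have Smem : forall x, x < t -> (cls (nth 0 S x) == c) && (p <= nth 0 S x <= q).
  move=> x xt; have : nth 0 S x \in S by apply: mem_nth; exact: leq_trans xt sS.
  rewrite mem_filter mem_iota => /andP [-> H]; apply/andP; split => //; lia.
exists (fun x => if x < t then nth 0 S x else g' (x - t)).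
exists (fun i => if i == 0 then c else pi' i.-1).
split.
- move=> x y xy yjt.
  case: (ltnP x t) => xt; case: (ltnP y t) => yt.
  + apply: (sorted_ltn_nth ltn_trans 0 Ssrt); rewrite ?inE //; lia.
  + have := Smem x xt; have := g'rng (y - t) ltac:(lia); lia.
  + lia.
  + apply: g'mon; lia.
- move=> x xjt; case: (ltnP x t) => xt.
  + have := Smem x xt; lia.
  + have := g'rng (x - t) ltac:(lia); lia.
- move=> x xjt; case: (ltnP x t) => xt.
  + rewrite divn_small //; have := Smem x xt; by case/andP => /eqP.
  + rewrite g'cls; last by lia.
    have -> : x = 1 * t + (x - t) by lia.
    rewrite divnMDl //; have -> : 1 * t + (x - t) - t = x - t by lia.
    by [].
- move=> i i' ij i'j.
  have pi'c : forall k, k < j -> pi' k != c.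
    move=> k kj; have := pi'K k kj; rewrite mem_rem_uniq // inE; by case/andP.
  case: i ij => [|i] ij; case: i' i'j => [|i'] i'j //=.
  + by move=> Hc'; have := pi'c i' ltac:(lia); rewrite -Hc' eqxx.
  + by move=> Hc'; have := pi'c i ltac:(lia); rewrite Hc' eqxx.
  + by move=> /pi'inj -> //; lia.
- move=> [|i] ij //=; exact: (mem_rem (pi'K i ltac:(lia))).
Qed.

Section Blk.
Variables (N l : nat) (col : nat -> nat).
Hypothesis colb : forall x, x < N -> col x < l.
Hypothesis colint : forall x y z, x < y -> y < z -> z < N -> col x = col z -> col y = col x.
Definition blk v := count (fun x => col x != col x.+1) (iota 0 v).

Lemma blkS v : blk v.+1 = blk v + (col v != col v.+1).
Proof.
rewrite /blk; have -> : iota 0 v.+1 = iota 0 v ++ [:: v] by rewrite -addn1 iotaD.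
by rewrite /blk count_cat /= addn0.
Qed.

Lemma blk_mono u v : u <= v -> blk u <= blk v.
Proof.
move=> /subnKC <-; elim: (v - u) => [|d IH]; first by rewrite addn0.
by rewrite addnS blkS; apply: leq_trans IH (leq_addr _ _).
Qed.

Lemma blk_eq d u : u + d < N -> blk (u + d) = blk u -> col (u + d) = col u.
Proof.
elim: d => [|d IH]; first by rewrite addn0.
rewrite addnS blkS => Hn Hb.
have h1 := blk_mono (leq_addr d u).
have h1' : blk (u + d) = blk u by move: Hb; case: (col (u + d) != _) => /=; lia.
move: Hb; rewrite h1' => Hb.
have Hz : (col (u + d) != col (u + d).+1) = false by move: Hb; case: (col (u+d) != _) => //=; lia.
move/negbFE/eqP: Hz => <-; apply: IH h1'; lia.
Qed.

Lemma blk_neq u v : u < N -> v < N -> col u != col v -> blk u != blk v.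
Proof.
wlog uv : u v / u <= v.
  move=> H uN vN cuv; case: (leqP u v) => [uv|vu]; first exact: H.
  by rewrite eq_sym; apply: H => //; [exact: ltnW | rewrite eq_sym].
move=> uN vN; apply: contra => /eqP Hb.
have := @blk_eq (v - u) u; rewrite subnKC // => H.
by rewrite (H vN (esym Hb)).
Qed.

Definition Dcount v := count (fun c => has (fun u => col u == c) (iota 0 v.+1)) (iota 0 l).

Lemma blk_D v : v < N -> blk v < Dcount v.
Proof.
elim: v => [|v IH] vN.
  rewrite /blk /= /Dcount -has_count; apply/hasP; exists (col 0).
    by rewrite mem_iota /=; apply: colb; lia.
  by rewrite /= eqxx.
have IH' := IH ltac:(lia).
rewrite blkS.
have sub : forall c, has (fun u => col u == c) (iota 0 v.+1) -> has (fun u => col u == c) (iota 0 v.+2).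
  move=> c /hasP [u]; rewrite mem_iota => Hu Hc; apply/hasP; exists u => //; rewrite mem_iota; lia.
have DD : Dcount v <= Dcount v.+1 by apply: sub_count => c; exact: sub.
case: eqP => Hc /=; first by rewrite addn0; lia.
pose a := fun c => has (fun u => col u == c) (iota 0 v.+1).
pose c' := col v.+1.
have ac' : a c' = false.
  apply/negP => /hasP [u]; rewrite mem_iota => Hu /eqP Hcu.
  rewrite /c' in Hcu.
  case: (ltngtP u v) => Huv.
  - by apply: Hc; rewrite (colint Huv (ltnSn v) vN Hcu).
  - lia.
  - by apply: Hc; rewrite -Hcu Huv.
have cnt1 : count (pred1 c') (iota 0 l) = 1.
  by rewrite count_uniq_mem ?iota_uniq // mem_iota /c' add0n colb.
have cnt0 : count (predI a (pred1 c')) (iota 0 l) = 0.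
  rewrite (eq_count (a2 := pred0)) ?count_pred0 // => x /=.
  by case: eqP => [->|]; rewrite ?andbF ?andbT.
have := count_predUI a (pred1 c') (iota 0 l); rewrite cnt1 cnt0 addn0 => HU.
have : count (predU a (pred1 c')) (iota 0 l) <= Dcount v.+1.
  apply: sub_count => x /orP [/sub //|/eqP ->]; apply/hasP; exists v.+1; rewrite ?mem_iota ?eqxx //; lia.
move=> HH; have HH' : count a (iota 0 l) + 1 <= Dcount v.+1.
  by apply: leq_trans HH; apply: eq_leq; exact: (esym HU).
have Da : Dcount v = count a (iota 0 l) by []. lia.
Qed.

Lemma blk_lt v : v < N -> blk v < l.
Proof.
move=> vN; apply: (leq_trans (blk_D vN)).
by rewrite /Dcount; apply: leq_trans (count_size _ _) _; rewrite size_iota.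
Qed.
End Blk.

Lemma count_res l m c : c < l -> count (fun i => i %% l == c) (iota 0 (l * m)) = m.
Proof.
move=> cl; elim: m => [|m IH]; first by rewrite muln0.
rewrite mulnS addnC iotaD count_cat IH (add0n (l * m)).
have -> : iota (l * m) l = map (addn (l * m)) (iota 0 l) by rewrite -iotaDl addn0.
rewrite count_map (eq_in_count (a2 := pred1 c)); last first.
  move=> x; rewrite mem_iota /= => Hx; rewrite mulnC modnMDl modn_small //; lia.
by rewrite count_uniq_mem ?iota_uniq // mem_iota add0n cl addn1.
Qed.

Lemma destroy (Fam : ograph -> Prop) l : 0 < l ->
  (forall n, Mod Fam n l) -> forall k, Tset Fam k -> l < k.
Proof.
move=> lpos HM k [F [HF [[f [fprop fint]] _]]].
rewrite ltnNge; apply/negP => kl.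
set N := ov F.
pose t := N.+1.
pose n := l * (l * t).
have npos : 0 < n by rewrite /n !muln_gt0 lpos.
have [e [[_ Hforb] [h [hinj hedge]]]] := HM n.
apply: (Hforb F HF).
pose hinv := invF hinj.
pose cls := fun x : nat => match @insub _ (fun x => x < n) 'I_n x with Some y => val (hinv y) %% l | None => l end.
have clsE : forall y : 'I_n, cls y = val (hinv y) %% l by move=> y; rewrite /cls valK.
have E1 : forall P : pred nat, count P (iota 0 n) = count (fun i : 'I_n => P (val i)) (enum 'I_n).
  by move=> P; rewrite -val_enum_ord count_map.
have Hp : perm_eq (map hinv (enum 'I_n)) (enum 'I_n).
  apply: uniq_perm; rewrite ?map_inj_uniq -?enumT ?enum_uniq //; first exact: (can_inj (f_invF hinj)).
  move=> y; rewrite mem_enum; apply/mapP; exists (h y); by rewrite ?mem_enum // /hinv invF_f.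
have Hcount : forall c, c < l -> count (fun x => cls x == c) (iota 0 n) = l * t.
  move=> c cl; rewrite -(count_res (l * t) cl) -/n !E1.
  rewrite (eq_count (a2 := fun y => (fun i : 'I_n => val i %% l == c) (hinv y))); last by move=> z /=; rewrite clsE.
  by rewrite -(count_map hinv (fun i : 'I_n => val i %% l == c)) (permP Hp).
have HK : forall c, c \in iota 0 l -> l * t <= count (fun x => cls x == c) (iota 0 (n - 0)).
  by move=> c; rewrite mem_iota subn0 => /andP [_ cl]; rewrite Hcount.
have [g [pi [gmon grng gcls piinj piK]]] := @greedy n cls t (ltn0Sn N) l 0 (iota 0 l) (iota_uniq 0 l) ltac:(by rewrite size_iota) HK.
pose col := fun x : nat => match @insub _ (fun x => x < N) 'I_N x with Some v => val (f v) | None => 0 end.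
have colE : forall v : 'I_N, col v = f v by move=> v; rewrite /col valK.
have colb : forall x, x < N -> col x < l.
  move=> x xN; have -> : x = val (Ordinal xN) by []; rewrite colE.
  exact: leq_trans (ltn_ord _) kl.
have colint : forall x y z, x < y -> y < z -> z < N -> col x = col z -> col y = col x.
  move=> x y z xy yz zN.
  have yN : y < N by lia.
  have xN : x < N by lia.
  have -> : x = val (Ordinal xN) by [].
  have -> : y = val (Ordinal yN) by [].
  have -> : z = val (Ordinal zN) by [].
  rewrite !colE => Hxz; congr val; exact: (fint (Ordinal xN) (Ordinal yN) (Ordinal zN) xy yz (val_inj Hxz)).
pose pos := fun v : 'I_N => blk col v * t + v.
have vt : forall v : 'I_N, v < t by move=> v; rewrite /t ltnS ltnW.
have pos_lt : forall v : 'I_N, pos v < l * t.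
  move=> v; have bl := blk_lt colb colint (ltn_ord v).
  have : (blk col v).+1 * t <= l * t by rewrite leq_mul2r bl orbT.
  rewrite mulSn /pos; have := vt v; lia.
have posdiv : forall v : 'I_N, pos v %/ t = blk col v.
  by move=> v; rewrite /pos divnMDl // divn_small ?addn0 ?vt.
have posmon : forall u v : 'I_N, u < v -> pos u < pos v.
  move=> u v uv; have H0 := blk_mono col (ltnW uv).
  have H : blk col u * t <= blk col v * t by rewrite leq_mul2r H0 orbT.
  rewrite /pos; lia.
pose phi := fun v : 'I_N => insubd (Ordinal npos) (g (pos v)) : 'I_n.
have phiE : forall v, val (phi v) = g (pos v).
  move=> v; rewrite /phi val_insubd; have := grng (pos v) (pos_lt v); by case/andP => _ ->.
have phimon : forall u v : 'I_N, u < v -> phi u < phi v.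
  move=> u v uv; rewrite !phiE; apply: gmon; [exact: posmon | exact: pos_lt].
exists phi; split => //.
  move=> u v Huv; apply/eqP; apply: contraT => Hne.
  case: (ltngtP u v) => H.
  - by move: (phimon _ _ H); rewrite Huv ltnn.
  - by move: (phimon _ _ H); rewrite Huv ltnn.
  - by move: Hne; rewrite (val_inj H) eqxx.
move=> u v Huv.
have fne := fprop u v Huv.
have cne : col u != col v by rewrite !colE; apply: contra fne => /eqP H; apply/eqP; exact: val_inj.
have bne := blk_neq (ltn_ord u) (ltn_ord v) cne.
have bu := blk_lt colb colint (ltn_ord u).
have bv := blk_lt colb colint (ltn_ord v).
have pne : pi (blk col u) != pi (blk col v).
  by apply: contra bne => /eqP /piinj ->.
have cu : cls (phi u) = pi (blk col u) by rewrite phiE gcls ?pos_lt // posdiv.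
have cv : cls (phi v) = pi (blk col v) by rewrite phiE gcls ?pos_lt // posdiv.
rewrite -(f_invF hinj (phi u)) -(f_invF hinj (phi v)); apply: hedge.
by rewrite /turan_graph -!clsE cu cv.
Qed.

Theorem proposition8p2 (Fam : ograph -> Prop) :
  chi_interp Fam = emax (chi_lt_family Fam) (Fin 1).
Proof.
apply: final => l lpos; split; first exact: destroy.
by move=> H n; apply: construct.
Qed.
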